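(* Let $M$ be a graded generalized Eulerian $A_n(K)$-module, $n\ge2$. Then $H_1(X_n;M)=\ker(X_n\colon M(-1)\to M)$ and $H_0(X_n;M)=M/X_nM$ are generalized Eulerian $A_{n-1}(K)$-modules.
   Context: $K$ is a field of characteristic zero; $A_n(K)=K\langle X_1,\dots,X_n,\partial_1,\dots,\partial_n\rangle$ graded by $\deg X_i=1$, $\deg\partial_i=-1$; $A_{n-1}(K)\subseteq A_n(K)$ is generated by $X_1,\dots,X_{n-1},\partial_1,\dots,\partial_{n-1}$ and acts on $H_1(X_n;M)$ and $H_0(X_n;M)$. $\mathcal E_m=\sum_{i=1}^mX_i\partial_i$; $|z|$ is the degree of homogeneous $z$. A graded $A_m(K)$-module $M$ is generalized Eulerian if for every homogeneous $z$ there is $a\ge1$ with $(\mathcal E_m-|z|)^az=0$. $M(l)_j=M_{j+l}$. *)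

(* Defs.v *)
From HB Require Import structures.
From mathcomp Require Import all_boot all_order all_algebra.
Set Implicit Arguments. Unset Strict Implicit. Unset Printing Implicit Defensive.
Import Order.TTheory GRing.Theory Num.Theory.
Local Open Scope ring_scope.

(* The Weyl algebra A_n(K) = K<X_1..X_n, d_1..d_n> is given by generators and
   relations; a (left) A_n(K)-module structure on a K-vector space V is the same
   as K-linear operators X i, D i (i < n, 0-based: X i stands for X_{i+1})
   satisfying the Weyl relations.  The grading deg X_i = 1, deg d_i = -1 on a
   graded module M = (+)_j M_j is encoded by the family of subspaces Mdeg j
   (V is their internal direct sum) with X i (M_j) <= M_(j+1), D i (M_j) <= M_(j-1).
   A_{m}(K) (m <= n) is the subalgebra generated by the first m pairs. *)

Section Defs.
Variables (K : fieldType) (V : lmodType K).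

Definition is_subspace (S : pred V) : Prop :=
  0 \in S /\ forall (a : K) (u v : V), u \in S -> v \in S -> a *: u + v \in S.

Definition graded_weyl_module (n : nat) (Mdeg : int -> pred V)
    (X D : nat -> V -> V) : Prop :=
  [/\
      (forall j, is_subspace (Mdeg j)),
      (forall v : V, exists (s : seq int) (f : int -> V),
          uniq s /\ (forall j, f j \in Mdeg j) /\ v = \sum_(j <- s) f j),
      (forall (s : seq int) (f : int -> V), uniq s ->
          (forall j, f j \in Mdeg j) -> \sum_(j <- s) f j = 0 ->
          forall j, j \in s -> f j = 0),
      (forall i, (i < n)%N ->
         [/\ forall (a : K) (u v : V), X i (a *: u + v) = a *: X i u + X i v,
             forall (a : K) (u v : V), D i (a *: u + v) = a *: D i u + D i v,
             forall j v, v \in Mdeg j -> X i v \in Mdeg (j + 1) &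
             forall j v, v \in Mdeg j -> D i v \in Mdeg (j - 1)]) &
      (forall i k, (i < n)%N -> (k < n)%N -> forall v : V,
         [/\ X i (X k v) = X k (X i v),
             D i (D k v) = D k (D i v) &
             D i (X k v) - X k (D i v) = (if i == k then v else 0)])].

Definition euler (m : nat) (X D : nat -> V -> V) (v : V) : V :=
  \sum_(i < m) X i (D i v).

Definition euler_shift_pow (m : nat) (X D : nat -> V -> V) (d : int) (a : nat)
    (z : V) : V :=
  iter a (fun w => euler m X D w - d%:~R *: w) z.

Definition gen_eulerian (m : nat) (Mdeg : int -> pred V) (X D : nat -> V -> V)
    : Prop :=
  forall (d : int) (z : V), z \in Mdeg d ->
    exists a : nat, (1 <= a)%N /\ euler_shift_pow m X D d a z = 0.

(* H_1(X_n; M) = ker (X_n : M(-1) -> M), a graded A_{n-1}(K)-module with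
   (H_1)_d = ker X_n  intersected with  M_(d-1); the A_{n-1}(K)-action is the
   restriction of that of M. *)
Definition H1_gen_eulerian (n : nat) (Mdeg : int -> pred V)
    (X D : nat -> V -> V) : Prop :=
  forall (d : int) (z : V), z \in Mdeg (d - 1) -> X n.-1 z = 0 ->
    exists a : nat, (1 <= a)%N /\ euler_shift_pow n.-1 X D d a z = 0.

(* H_0(X_n; M) = M / X_n M, graded by (H_0)_d = image of M_d; an element of
   (H_0)_d is the class of some z in M_d, and a class is zero iff its
   representative lies in X_n M. *)
Definition H0_gen_eulerian (n : nat) (Mdeg : int -> pred V)
    (X D : nat -> V -> V) : Prop :=
  forall (d : int) (z : V), z \in Mdeg d ->
    exists a : nat, (1 <= a)%N /\
      exists w : V, euler_shift_pow n.-1 X D d a z = X n.-1 w.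

End Defs.

(* Main.v *)
Require Import Defs.
From HB Require Import structures.
From mathcomp Require Import all_boot all_order all_algebra.
Import Order.TTheory GRing.Theory Num.Theory.
Local Open Scope ring_scope.

Set Implicit Arguments. Unset Strict Implicit.
Section Aux.
Variables (K : fieldType) (V : lmodType K).

Lemma lin_props (f : V -> V) :
  (forall (a : K) u v, f (a *: u + v) = a *: f u + f v) ->
  [/\ f 0 = 0, (forall u v, f (u + v) = f u + f v) &
      (forall (a : K) u, f (a *: u) = a *: f u)].
Proof.
move=> hf.
have f0 : f 0 = 0.
  have := hf 1 0 0; rewrite !scale1r addr0 => h.
  by apply: (@addrI _ (f 0)); rewrite addr0 -h.
split=> //.
  by move=> u v; rewrite -{1}[u]scale1r hf scale1r.
by move=> a u; rewrite -[a *: u]addr0 hf f0 addr0.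
Qed.

Variables (m : nat) (Mdeg : int -> pred V) (X D : nat -> V -> V).
Hypothesis hG : graded_weyl_module m.+2 Mdeg X D.

Lemma Xadd i : (i < m.+2)%N -> forall u v, X i (u + v) = X i u + X i v.
Proof.
case: hG => _ _ _ hl _ hi; case: (hl i hi) => hx _ _ _.
by case: (lin_props hx).
Qed.
Lemma Dadd i : (i < m.+2)%N -> forall u v, D i (u + v) = D i u + D i v.
Proof.
case: hG => _ _ _ hl _ hi; case: (hl i hi) => _ hx _ _.
by case: (lin_props hx).
Qed.
Lemma Xscale i : (i < m.+2)%N -> forall (a : K) u, X i (a *: u) = a *: X i u.
Proof.
case: hG => _ _ _ hl _ hi; case: (hl i hi) => hx _ _ _.
by case: (lin_props hx).
Qed.
Lemma Dscale i : (i < m.+2)%N -> forall (a : K) u, D i (a *: u) = a *: D i u.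
Proof.
case: hG => _ _ _ hl _ hi; case: (hl i hi) => _ hx _ _.
by case: (lin_props hx).
Qed.
Lemma X0 i : (i < m.+2)%N -> X i 0 = 0.
Proof.
case: hG => _ _ _ hl _ hi; case: (hl i hi) => hx _ _ _.
by case: (lin_props hx).
Qed.
Lemma D0 i : (i < m.+2)%N -> D i 0 = 0.
Proof.
case: hG => _ _ _ hl _ hi; case: (hl i hi) => _ hx _ _.
by case: (lin_props hx).
Qed.

Let E := euler m.+1 X D.
Let x := X m.+1.
Let dd := D m.+1.

Lemma Eadd u v : E (u + v) = E u + E v.
Proof.
rewrite /E /euler -big_split /=; apply: eq_bigr => i _.
have hi : (i < m.+2)%N by apply: (ltn_trans (ltn_ord i)).
by rewrite Dadd // Xadd.
Qed.

Lemma Escale (a : K) u : E (a *: u) = a *: E u.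
Proof.
rewrite /E /euler scaler_sumr; apply: eq_bigr => i _.
have hi : (i < m.+2)%N by apply: (ltn_trans (ltn_ord i)).
by rewrite Dscale // Xscale.
Qed.

Lemma Esplit w : euler m.+2 X D w = E w + x (dd w).
Proof. by rewrite /euler big_ord_recr. Qed.

Lemma xE w : x (E w) = E (x w).
Proof.
rewrite /E /euler /x.
rewrite (big_morph (X m.+1) (Xadd (ltnSn _)) (X0 (ltnSn _))).
apply: eq_bigr => i _.
have hi : (i < m.+2)%N by apply: (ltn_trans (ltn_ord i)).
case: hG => _ _ _ _ hw.
case: (hw m.+1 (nat_of_ord i) (ltnSn _) hi (D i w)) => -> _ _.
case: (hw (nat_of_ord i) m.+1 hi (ltnSn _) w) => _ _.
have -> : (nat_of_ord i == m.+1) = false by apply/negbTE; rewrite neq_ltn ltn_ord.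
by move/eqP; rewrite subr_eq0 => /eqP ->.
Qed.

Lemma x_ddz w : x w = 0 -> x (dd w) = - w.
Proof.
move=> h; case: hG => _ _ _ _ hw.
case: (hw m.+1 m.+1 (ltnSn _) (ltnSn _) w) => _ _.
rewrite eqxx -/x -/dd h /dd (D0 (ltnSn _)) sub0r => e.
by apply/eqP; rewrite -eqr_oppLR; apply/eqP.
Qed.

Definition Aop (c : int) w := E w - c%:~R *: w.

Lemma xA c w : x (Aop c w) = Aop c (x w).
Proof.
rewrite /Aop -xE -scaleNr /x.
by rewrite Xadd // Xscale // scaleNr.
Qed.

Lemma Aadd c u v : Aop c (u + v) = Aop c u + Aop c v.
Proof. rewrite /Aop Eadd scalerDr; by rewrite opprD addrACA. Qed.

Lemma E0 : E 0 = 0.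
Proof. by have := Escale 0 0; rewrite !scale0r. Qed.

Lemma A0 c : Aop c 0 = 0.
Proof. by rewrite /Aop E0 scaler0 subr0. Qed.

Lemma A_eq c w : x w = 0 ->
  Aop c w = euler m.+2 X D w - (c - 1)%:~R *: w.
Proof.
move=> h; rewrite Esplit (x_ddz h) /Aop rmorphB /= scalerBl scale1r.
by rewrite opprB addrA subrK.
Qed.

Lemma H1part c z : X m.+1 z = 0 -> forall k,
  X m.+1 (iter k (Aop c) z) = 0 /\ iter k (Aop c) z = iter k (fun w => euler m.+2 X D w - (c - 1)%:~R *: w) z.
Proof.
move=> hz; elim=> [|k [IH1 IH2]] //=.
split; first by have := xA c (iter k (Aop c) z); rewrite /x => ->; rewrite IH1 A0.
by rewrite A_eq // IH2.
Qed.

Lemma H0part c z k : exists y,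
  iter k (fun w => euler m.+2 X D w - c%:~R *: w) z = iter k (Aop c) z + x y.
Proof.
elim: k => [|k [y IH]] /=; first by exists 0; rewrite /x X0 // addr0.
set u := iter k _ z.
exists (Aop c y + dd u).
rewrite Esplit -/x -/dd -/u.
have -> : E u + x (dd u) - c%:~R *: u = Aop c u + x (dd u).
  by rewrite /Aop addrAC.
rewrite {1}/u IH Aadd -xA /x Xadd //.
by rewrite addrA.
Qed.

End Aux.
Unset Implicit Arguments.

Theorem mainTheorem9 (K : fieldType) (charK0 : [pchar K] =i pred0)
    (V : lmodType K) (n : nat) (Mdeg : int -> pred V) (X D : nat -> V -> V) :
  (2 <= n)%N ->
  graded_weyl_module n Mdeg X D ->
  gen_eulerian n Mdeg X D ->
  H1_gen_eulerian n Mdeg X D /\ H0_gen_eulerian n Mdeg X D.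
Proof.
case: n => [|[|m]] // _ hG hE; split.
- move=> c z hz hx.
  have [a [ha1 ha]] := hE _ _ hz.
  exists a; split => //; rewrite -ha /euler_shift_pow /=.
  have [_ <-] := H1part hG c hx a.
  by [].
- move=> c z hz.
  have [a [ha1 ha]] := hE _ _ hz.
  exists a; split => //.
  have [y hy] := H0part hG c z a.
  exists (- y).
  move: ha; rewrite /euler_shift_pow /= hy => /eqP; rewrite addr_eq0 => /eqP ->.
  have [_ _ hl _ _] := hG.
  by rewrite -scaleN1r (Xscale hG) // scaleN1r.
Qed.
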